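(* Let $p\ge5$, $1\le a\le p-4$, $s_\varepsilon\in\{0,\dots,p-2\}$, and let $k=k_\bullet(p-1)+k_\varepsilon$ with $k_\bullet\ge1$. Then $\mathrm M(k)\le\lfloor\log_p k_\bullet\rfloor+3$.
   Context: $v_p(p)=1$. $\{m\}\in\{0,\dots,p-2\}$ is the residue of $m$ mod $p-1$. $k_\varepsilon=2+\{a+2s_\varepsilon\}$, $\delta_\varepsilon=\lfloor(s_\varepsilon+\{a+s_\varepsilon\})/(p-1)\rfloor$; if $a+s_\varepsilon<p-1$, $t_1=s_\varepsilon+\delta_\varepsilon$, $t_2=a+s_\varepsilon+\delta_\varepsilon+2$; else $t_1=\{a+s_\varepsilon\}+\delta_\varepsilon+1$, $t_2=a+s_\varepsilon+\delta_\varepsilon+1$. For $k\ge2$, $k=k_\bullet(p-1)+k_\varepsilon$: $d_k^{\mathrm{Iw}}=2k_\bullet+2-2\delta_\varepsilon$; $d_k^{\mathrm{ur}}=2\lfloor(k_\bullet-t_1)/(p+1)\rfloor+1+\eta_k$ ($\eta_k=1$ if $k_\bullet-(p+1)\lfloor(k_\bullet-t_1)/(p+1)\rfloor\ge t_2$, else $0$). $w_k=\exp(p(k-2))-1$ (so $v_p(w_k-w_{k'})=1+v_p(k-k')$). For $n\ge1$, $m_n(k)=\min\{n-d_k^{\mathrm{ur}},d_k^{\mathrm{Iw}}-d_k^{\mathrm{ur}}-n\}$ if $d_k^{\mathrm{ur}}<n<d_k^{\mathrm{Iw}}-d_k^{\mathrm{ur}}$, else $0$. $\mathrm M(k)=\max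 v_p(w_{k'}-w_k)$ over all $k'\ne k$, $k'\ge2$, $k'\equiv k_\varepsilon\pmod{p-1}$, such that $m_n(k')\ne0$ for some $1\le n\le d_k^{\mathrm{Iw}}$. *)

(* Defs.v *)
From mathcomp Require Import all_boot all_order all_algebra.
Set Implicit Arguments. Unset Strict Implicit. Unset Printing Implicit Defensive.
Import Order.TTheory GRing.Theory Num.Theory.

Definition resid (p m : nat) : nat := (m %% p.-1)%N.

Definition k_eps (p a s : nat) : nat := (2 + resid p (a + 2 * s))%N.

Definition delta_eps (p a s : nat) : nat := ((s + resid p (a + s)) %/ p.-1)%N.

Definition t1 (p a s : nat) : nat :=
  if (a + s < p.-1)%N then (s + delta_eps p a s)%N
  else (resid p (a + s) + delta_eps p a s + 1)%N.

Definition t2 (p a s : nat) : nat :=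
  if (a + s < p.-1)%N then (a + s + delta_eps p a s + 2)%N
  else (a + s + delta_eps p a s + 1)%N.

Definition k_bul (p a s k : nat) : nat := ((k - k_eps p a s) %/ p.-1)%N.

Local Open Scope ring_scope.

Definition d_Iw (p a s k : nat) : int :=
  2 * (k_bul p a s k)%:Z + 2 - 2 * (delta_eps p a s)%:Z.

(* floor((k_bullet - t1)/(p+1)); divz is floor division for positive divisor *)
Definition q_ur (p a s k : nat) : int :=
  (((k_bul p a s k)%:Z - (t1 p a s)%:Z) %/ (p.+1)%:Z)%Z.

Definition eta (p a s k : nat) : int :=
  if (t2 p a s)%:Z <= (k_bul p a s k)%:Z - (p.+1)%:Z * q_ur p a s k then 1 else 0.

Definition d_ur (p a s k : nat) : int := 2 * q_ur p a s k + 1 + eta p a s k.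

Definition m_n (p a s : nat) (n : int) (k : nat) : int :=
  if (d_ur p a s k < n) && (n < d_Iw p a s k - d_ur p a s k)
  then Num.min (n - d_ur p a s k) (d_Iw p a s k - d_ur p a s k - n)
  else 0.

(* v_p(w_k - w_k') = 1 + v_p(k - k')  (k <> k') *)
Definition vp_wdiff (p k k' : nat) : nat := (1 + logn p ((k - k') + (k' - k)))%N.

(* Main.v *)
Require Import Defs.
From mathcomp Require Import all_boot all_order all_algebra.
From mathcomp Require Import zify.
Import Order.TTheory GRing.Theory Num.Theory.

Lemma arith (p X kb kb' : nat) : (1 < p)%N -> (p <= X)%N -> (kb < X)%N ->
  (kb' <= kb * p + 2 * p + 1 + kb)%N ->
  ((kb * p.-1 - kb' * p.-1) + (kb' * p.-1 - kb * p.-1) < p * (p * X))%N.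
Proof.
move=> p1 pX kbX hb.
rewrite -!mulnBl.
have hX : (kb * p <= (X - 1) * p)%N by rewrite leq_mul2r; lia.
rewrite mulnBl mul1n in hX.
have pp : (p * p <= X * p)%N by rewrite leq_mul2r; lia.
case: (leqP kb' kb) => h.
  have -> : (kb' - kb = 0)%N by lia.
  rewrite mul0n addn0.
  have : ((kb - kb') * p.-1 <= kb * p.-1)%N by rewrite leq_mul2r; lia.
  have : (kb * p.-1 <= X * p.-1)%N by rewrite leq_mul2r; lia.
  have : (X * p.-1 < X * p)%N by rewrite ltn_mul2l; lia.
  have : (X * p < X * p * p)%N by rewrite ltn_Pmulr //; lia.
  rewrite [p * (p * X)]mulnC [p * X]mulnC; lia.
have -> : (kb - kb' = 0)%N by lia.
rewrite mul0n add0n.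
have pXp : (p <= X * p)%N by rewrite leq_pmull; lia.
have hd : (kb' - kb <= X * p + p + 1)%N by lia.
have : ((kb' - kb) * p.-1 <= (X * p + p + 1) * p.-1)%N by rewrite leq_mul2r hd orbT.
have : ((X * p + p + 1) * p.-1 + X * p + 1 = X * p * p + p * p)%N.
  clear -p1; case: p p1 => // q _ /=; nia.
rewrite [p * (p * X)]mulnC [p * X]mulnC; lia.
Qed.

Local Open Scope ring_scope.
Lemma key_bound (p a s kb kb' : nat) :
  (5 <= p)%N -> (s <= p - 2)%N ->
  (exists n : int, ((1 <= n)%R /\ (n <= d_Iw p a s (kb * p.-1 + k_eps p a s)%N)%R)
                     /\ m_n p a s n (kb' * p.-1 + k_eps p a s)%N <> 0%R) ->
  (kb' < (kb + 1) * (p + 1) + t1 p a s)%N.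
Proof.
move=> p5 sp [n [[n1 nle] mn]].
have P0 : (0 < p.-1)%N by lia.
have kbE : forall j, k_bul p a s (j * p.-1 + k_eps p a s) = j.
  by move=> j; rewrite /k_bul addnK mulnK.
move: nle mn; rewrite /m_n /d_Iw /d_ur kbE.
case: ifP => [/andP [h1 _] | _]; last by [].
move=> nle _.
have eta0 : (0 <= eta p a s (kb' * p.-1 + k_eps p a s))%R.
  by rewrite /eta; case: ifP.
move: h1 eta0; rewrite /q_ur kbE.
set q := ((kb'%:Z - (t1 p a s)%:Z) %/ (p.+1)%:Z)%Z.
set e := eta _ _ _ _.
move=> h1 eta0.
have qle : (q <= kb%:Z)%R by lia.
have hm := ltz_pmod (kb'%:Z - (t1 p a s)%:Z) (d:=(p.+1)%:Z) (ltac:(lia)).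
have he := divz_eq (kb'%:Z - (t1 p a s)%:Z) (p.+1)%:Z.
rewrite -/q in he.
have qm : (q * (p.+1)%:Z <= kb%:Z * (p.+1)%:Z)%R.
  by rewrite ler_pM2r //; lia.
lia.
Qed.
Local Close Scope ring_scope.

Theorem lemma3p9 (p a s kb : nat) :
  prime p -> (5 <= p)%N -> (1 <= a <= p - 4)%N -> (s <= p - 2)%N -> (1 <= kb)%N ->
  forall k' : nat,
    (2 <= k')%N ->
    k' = k_eps p a s %[mod p.-1] ->
    k' <> (kb * p.-1 + k_eps p a s)%N ->
    (exists n : int, ((1 <= n)%R /\ (n <= d_Iw p a s (kb * p.-1 + k_eps p a s))%R)
                     /\ m_n p a s n k' <> 0%R) ->
    (vp_wdiff p (kb * p.-1 + k_eps p a s) k' <= trunc_log p kb + 3)%N.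
Proof.
move=> _ p5 _ sp kb1 k' k'2 kmod kne Hex.
have P0 : (0 < p.-1)%N by lia.
have p1 : (1 < p)%N by lia.
set L := trunc_log p kb.
set ke := k_eps p a s.
have keb : (2 <= ke <= p)%N.
  have := ltn_pmod (a + 2 * s) P0; rewrite /ke /k_eps /resid; lia.
have t1b : (t1 p a s <= p + 1)%N.
  have r1 := ltn_pmod (a + s) P0.
  have d1 : (delta_eps p a s < 2)%N.
    by rewrite /delta_eps ltn_divLR // /resid; lia.
  rewrite /t1 /resid in r1 *; case: ifP; lia.
set X := p ^ L.+1.
have kbX : (kb < X)%N by apply: trunc_log_ltn.
have pX : (p <= X)%N by rewrite /X expnS leq_pmulr // expn_gt0; lia.
have D : ((kb * p.-1 + ke - k') + (k' - (kb * p.-1 + ke)) < p * (p * X))%N.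
  case: (ltnP k' ke) => hk.
    have h1 : (kb * p.-1 <= (X - 1) * p.-1)%N by rewrite leq_mul2r; lia.
    rewrite mulnBl mul1n in h1.
    have h2 : (X * p.-1 < X * p)%N by rewrite ltn_mul2l; lia.
    have h3 : (X * p < X * p * p)%N by rewrite ltn_Pmulr //; lia.
    have h4 : (p.-1 <= X * p.-1)%N by rewrite leq_pmull; lia.
    rewrite [p * (p * X)]mulnC [p * X]mulnC; lia.
  have : (p.-1 %| k' - ke)%N by rewrite -eqn_mod_dvd // kmod.
  case/dvdnP => kb' hkb'.
  have k'E : k' = (kb' * p.-1 + ke)%N by lia.
  rewrite k'E in Hex.
  have hb := key_bound p a s kb kb' p5 sp Hex.
  rewrite k'E !subnDr.
  apply: arith => //.
  move: hb; rewrite mulnDl mulnDr !muln1 mul1n; lia.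
have Dpos : (0 < (kb * p.-1 + ke - k') + (k' - (kb * p.-1 + ke)))%N by lia.
rewrite /vp_wdiff.
have h1 := dvdn_leq Dpos (pfactor_dvdnn p ((kb * p.-1 + ke - k') + (k' - (kb * p.-1 + ke)))).
have h2 : (p ^ logn p ((kb * p.-1 + ke - k') + (k' - (kb * p.-1 + ke))) < p ^ (L + 3))%N.
  have e : (p ^ (L + 3) = p * (p * X))%N by rewrite /X addn3 !expnS.
  rewrite e; lia.
rewrite ltn_exp2l // in h2; lia.
Qed.
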